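(* Let $R$ be an environment with a single door pixel $s$, and let $A=|R|$. Run the Depth-First Leader-Follower (DFLF) strategy defined in the context until all of $R$ is filled. Then each robot makes at most $A$ moves. Consequently, the total number of moves made by all robots is at most $A^2$.
   Context: Pixels are the unit squares of the integer grid, identified with their lower-left corners $(i,j)\in\mathbb{Z}^2$. Two pixels are neighbors if they share an edge, so $(i,j)$ has the four neighbors $(i\pm1,j)$ and $(i,j\pm1)$. The environment $R$ is a finite set of pixels that is connected under this neighbor relation. It contains a single distinguished door pixel $s\in R$. Time is discrete, $t=0,1,2,\dots$. At each time, every pixel of $R$ holds at most one robot. $p(r,t)$ denotes the pixel occupied by robot $r$ at time $t$, and $\mathrm{prev}(r,t)=p(r,t-1)$. In one time step a robot either stays where it is or moves to a neighboring pixel of $R$ that is unoccupied. Vacating rule: if a robot occupies pixel $q$ at time $t$ and a different pixel at time $t+1$, then no robot occupies $q$ at time $t+1$; so the earliest a vacated pixel can be re-entered is time $t+2$. At time $0$ exactly one robot is present, on $s$. Door rule: whenever the robot on $s$ leaves, a new robot appears on $s$ as soon as the vacating rule allows. A pixel of $R$ is a frontier pixel at time $t$ if no robot has occupied it at any time $\le t$. The DFLF strategy works as follows. - Each robot is either moving or stopped. A moving robot is either the leader or a follower. - The first robot is the leader. Each newly appearing robot becomes the successor of the robot that most recently left the door, and that robot becomes its predecessor $\mathrm{pred}(r)$. These relations never change. - At each step, the leader behaves as follows. If the leader has a neighboring frontier pixel, it moves to one of them (chosen arbitrarily). Otherwise it becomes stopped permanently and leadership passes to its successor. If the leader has no frontier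 neighbor and is on the door $s$, the algorithm halts. - A follower $r$ moves at time $t$ to the pixel $\mathrm{prev}(\mathrm{pred}(r),t)$ previously occupied by its predecessor. - A stopped robot never moves again. Makespan: the first time $t^*$ at which every pixel of $R$ is occupied. *)

(* Defs.v *)
From HB Require Import structures.
From mathcomp Require Import all_boot all_order all_algebra.
From mathcomp Require Import finmap.
Set Implicit Arguments. Unset Strict Implicit. Unset Printing Implicit Defensive.
Import GRing.Theory Num.Theory.
Local Open Scope fset_scope.

(** Pixels are identified with their lower-left corners (i,j) in Z^2. *)
Definition pixel := (int * int)%type.

Definition adj (p q : pixel) : bool :=
  ((p.1 == q.1) && ((p.2 == (q.2 + 1)%R) || (q.2 == (p.2 + 1)%R))) ||
  ((p.2 == q.2) && ((p.1 == (q.1 + 1)%R) || (q.1 == (p.1 + 1)%R))).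

Definition connected_env (R : {fset pixel}) : Prop :=
  forall p q, p \in R -> q \in R ->
    exists l : seq pixel,
      [/\ path adj p l, all (fun x => x \in R) l & last p l = q].

(** A run is described by
    - [pos t r] : the pixel of robot number [r] at time [t] ([None] if robot
      [r] has not appeared yet). Robots are numbered in order of appearance,
      so [pred (r+1) = r];
    - [lead t] : the index of the current leader at time [t]; robots with a
      smaller index are stopped, present robots with larger index are
      followers. *)
Section Run.
Variables (R : {fset pixel}) (s : pixel)
          (pos : nat -> nat -> option pixel) (lead : nat -> nat).

Definition occupied (t : nat) (q : pixel) : Prop := exists r, pos t r = Some q.

Definition frontier (t : nat) (q : pixel) : Prop :=
  q \in R /\ forall t', t' <= t -> ~ occupied t' q.

Definition has_frontier_nb (t : nat) (p : pixel) : Prop :=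
  exists q, adj p q /\ frontier t q.

Definition halted (t : nat) : Prop :=
  pos t (lead t) = Some s /\ ~ has_frontier_nb t s.

(** The robot on s left it during step t-1 -> t (so s is free at time t and,
    by the vacating rule, a new robot may appear at time t+1). *)
Definition door_vacated (t : nat) : Prop :=
  0 < t /\ exists r, pos t.-1 r = Some s /\ pos t r <> Some s.

Definition dflf_step (t : nat) : Prop :=
  let L := lead t in
  (exists p, pos t L = Some p /\
     (has_frontier_nb t p ->
        exists q, [/\ adj p q, frontier t q, pos t.+1 L = Some q & lead t.+1 = L])
     /\ (~ has_frontier_nb t p -> pos t.+1 L = Some p /\ lead t.+1 = L.+1))
  /\ (forall r, r < L -> pos t.+1 r = pos t r)
  (* a follower moves to prev(pred(r), t) = p(pred(r), t-1) *)
  /\ (forall r, L < r -> pos t r <> None -> pos t.+1 r = pos t.-1 r.-1)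
  /\ (forall r, L < r -> pos t r = None ->
        (pos t.+1 r = Some s /\ (door_vacated t /\ pos t r.-1 <> None))
        \/ (pos t.+1 r = None /\ ~ (door_vacated t /\ pos t r.-1 <> None))).

Definition dflf_run : Prop :=
  [/\ pos 0 0 = Some s, (forall r, 0 < r -> pos 0 r = None), lead 0 = 0 &
      forall t, (halted t -> (forall r, pos t.+1 r = pos t r) /\ lead t.+1 = lead t)
                /\ (~ halted t -> dflf_step t)].

Definition filled (t : nat) : Prop := forall q, q \in R -> occupied t q.

Definition makespan (T : nat) : Prop := filled T /\ forall t, t < T -> ~ filled t.

End Run.

Definition moves (pos : nat -> nat -> option pixel) (r T : nat) : nat :=
  \sum_(t < T) ((pos t r != None) && (pos t.+1 r != pos t r)).

(* Main.v *)
Require Import Defs.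
From HB Require Import structures.
From mathcomp Require Import all_boot all_order all_algebra.
From mathcomp Require Import finmap.
From mathcomp Require Import zify.
From Stdlib Require Import Classical.
Set Implicit Arguments. Unset Strict Implicit.

Lemma sum_count_iota (b : pred nat) T : \sum_(t < T) b t = count b (iota 0 T).
Proof.
elim: T => [|T IH]; first by rewrite big_ord0.
rewrite big_ord_recr IH; have -> : iota 0 T.+1 = iota 0 (T + 1) by rewrite addn1.
by rewrite iotaD count_cat /= add0n addn0.
Qed.

Section DF.
Variables (R : {fset pixel}) (s : pixel)
          (pos : nat -> nat -> option pixel) (lead : nat -> nat) (T : nat).
Hypothesis Hs : s \in R.
Hypothesis Hrun : dflf_run R s pos lead.
Hypothesis HnoH : forall t, t < T -> ~ halted R s pos lead t.

Lemma pos00 : pos 0 0 = Some s. Proof. by case: Hrun. Qed.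
Lemma pos0r r : 0 < r -> pos 0 r = None. Proof. by case: Hrun => _ H _ _; apply: H. Qed.
Lemma lead0 : lead 0 = 0. Proof. by case: Hrun. Qed.

Lemma step_of t : ~ halted R s pos lead t -> dflf_step R s pos lead t.
Proof. by case: Hrun => _ _ _ H; case: (H t) => _; apply. Qed.

Lemma halted_frozen t : halted R s pos lead t ->
  (forall r, pos t.+1 r = pos t r) /\ lead t.+1 = lead t.
Proof. by case: Hrun => _ _ _ H; case: (H t) => H1 _; apply: H1. Qed.

Lemma lead_present t : pos t (lead t) <> None.
Proof.
case: (classic (halted R s pos lead t)) => [[-> _]//|/step_of [[p [-> _]] _]//].
Qed.

Lemma not_frontier_s t : ~ frontier R pos t s.
Proof. by move=> [_ H]; apply: (H 0) => //; exists 0; rewrite pos00. Qed.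

Lemma stopped_stay t r : r < lead t -> pos t.+1 r = pos t r.
Proof.
move=> Hr; case: (classic (halted R s pos lead t)) => [/halted_frozen [H _]|/step_of [_ [H _]]].
  by apply: H.
by apply: H.
Qed.

Lemma leader_step t : ~ halted R s pos lead t ->
  (exists q, frontier R pos t q /\ pos t.+1 (lead t) = Some q /\ lead t.+1 = lead t)
  \/ (pos t.+1 (lead t) = pos t (lead t) /\ lead t.+1 = (lead t).+1).
Proof.
move=> /step_of [[p [Hp [H1 H2]]] _].
case: (classic (has_frontier_nb R pos t p)) => Hf.
  by case: (H1 Hf) => q [_ Hq1 Hq2 Hq3]; left; exists q.
by case: (H2 Hf) => Ha Hb; right; rewrite Hp.
Qed.

Lemma lead_next t : lead t.+1 = lead t \/ lead t.+1 = (lead t).+1.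
Proof.
case: (classic (halted R s pos lead t)) => [/halted_frozen [_ ->]|/leader_step]; first by left.
by case=> [[q [_ [_ ->]]]|[_ ->]]; [left|right].
Qed.

Lemma lead_mono t1 t2 : t1 <= t2 -> lead t1 <= lead t2.
Proof.
elim: t2 => [|t2 IH]; first by rewrite leqn0 => /eqP ->.
rewrite leq_eqVlt => /orP [/eqP ->//|]; rewrite ltnS => /IH.
by case: (lead_next t2) => ->; lia.
Qed.

Lemma follower_step t r : ~ halted R s pos lead t -> lead t < r -> pos t r <> None ->
  pos t.+1 r = pos t.-1 r.-1.
Proof. by move=> /step_of [_ [_ [H _]]]; apply: H. Qed.

Lemma door_step t r : ~ halted R s pos lead t -> lead t < r -> pos t r = None ->
  (pos t.+1 r = Some s /\ (door_vacated s pos t /\ pos t r.-1 <> None))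
  \/ (pos t.+1 r = None /\ ~ (door_vacated s pos t /\ pos t r.-1 <> None)).
Proof. by move=> /step_of [_ [_ [_ H]]]; apply: H. Qed.


Definition G1 t := forall r, pos t r.+1 <> None -> pos t r <> None.
Definition G2 t := forall r, pos t r.+1 <> None -> 2 <= t /\ pos t.-2 r <> None.
Definition G4 t := forall j i, pos t j = Some s -> j < i -> pos t i = None.
Definition G5 t := forall j t', pos t j = Some s -> t' <= t -> pos t' j <> None -> pos t' j = Some s.
Definition G6 t := forall r, lead t < r -> pos t r <> None -> 2 <= t /\ pos t r = pos t.-2 r.-1.
Definition Pe t := forall r, pos t r <> None -> pos t.+1 r <> None.
Definition Inv t := G1 t /\ G2 t /\ G4 t /\ G5 t /\ G6 t /\ Pe t.

Lemma Pe_of t : G6 t -> (2 <= t -> Pe t.-2) -> Pe t.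
Proof.
move=> H6 Hp r Hr.
case: (classic (halted R s pos lead t)) => [/halted_frozen [-> _]//|Hh].
case: (ltngtP r (lead t)) => Hrl.
- by rewrite stopped_stay.
- rewrite follower_step //; case: (H6 r Hrl Hr) => H2 Heq.
  have -> : t.-1 = t.-2.+1 by lia.
  by apply: (Hp H2); rewrite -Heq.
- subst r; case: (leader_step Hh) => [[q [_ [-> _]]]//|[-> _]//].
Qed.

Lemma pers_range n : (forall m, m < n -> Pe m) ->
  forall t1 t2 r, t1 <= t2 <= n -> pos t1 r <> None -> pos t2 r <> None.
Proof.
move=> HP t1; elim=> [|t2 IH] r /andP [H1 H2] Hr.
  by move: H1; rewrite leqn0 => /eqP <-.
move: H1; rewrite leq_eqVlt => /orP [/eqP <-//|H1].
apply: HP; first by lia.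
by apply: IH => //; lia.
Qed.

Lemma prefix t : G1 t -> forall i j, i <= j -> pos t j <> None -> pos t i <> None.
Proof.
move=> H1 i; elim=> [|j IH]; first by rewrite leqn0 => /eqP ->.
rewrite leq_eqVlt => /orP [/eqP ->//|]; rewrite ltnS => Hij Hj.
by apply: IH => //; apply: H1.
Qed.

Lemma prefix_lt t : G1 t -> forall y x, pos t y <> None -> pos t x = None -> y < x.
Proof.
move=> H1 y x Hy Hx; case: (ltnP y x) => // Hxy.
by move: (prefix H1 Hxy Hy); rewrite Hx.
Qed.

Lemma appear u x : pos u x = None -> pos u.+1 x <> None ->
  [/\ lead u < x, door_vacated s pos u, pos u x.-1 <> None & pos u.+1 x = Some s].
Proof.
move=> Hn Hs1.
case: (classic (halted R s pos lead u)) => [/halted_frozen [H _]|Hh].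
  by rewrite H in Hs1.
case: (ltngtP x (lead u)) => Hxl.
- by rewrite stopped_stay in Hs1.
- case: (door_step Hh Hxl Hn) => [[-> [Hd Hp]]|[H _]]; last by rewrite H in Hs1.
  by split.
- by subst x; case: (lead_present Hn).
Qed.

Lemma inv0 : Inv 0.
Proof.
have H6 : G6 0 by move=> r; rewrite lead0 => Hr; rewrite pos0r.
split; [|split; [|split; [|split; [|split]]]] => //.
- by move=> r; rewrite pos0r.
- by move=> r; rewrite pos0r.
- move=> j i; case: j => [|j]; last by rewrite pos0r.
  by move=> _ Hi; rewrite pos0r.
- by move=> j t' H; rewrite leqn0 => /eqP ->.
- by apply: Pe_of.
Qed.

Section Step.
Variable u : nat.
Hypothesis Hu : u < T.
Hypothesis IH : forall m, m <= u -> Inv m.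

Lemma IH1 m : m <= u -> G1 m. Proof. by move/IH => [? _]. Qed.
Lemma IH2 m : m <= u -> G2 m. Proof. by move/IH => [_ [? _]]. Qed.
Lemma IH4 m : m <= u -> G4 m. Proof. by move/IH => [_ [_ [? _]]]. Qed.
Lemma IH5 m : m <= u -> G5 m. Proof. by move/IH => [_ [_ [_ [? _]]]]. Qed.
Lemma IH6 m : m <= u -> G6 m. Proof. by move/IH => [_ [_ [_ [_ [? _]]]]]. Qed.
Lemma IHP m : m <= u -> Pe m. Proof. by move/IH => [_ [_ [_ [_ [_ ?]]]]]. Qed.

Lemma persU t1 t2 r : t1 <= t2 <= u.+1 -> pos t1 r <> None -> pos t2 r <> None.
Proof. by apply: pers_range => m Hm; apply: IHP. Qed.

Lemma s_uniq t y z : t <= u -> pos t y = Some s -> pos t z = Some s -> y = z.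
Proof.
move=> Ht Hy Hz; case: (ltngtP y z) => // H.
- by move: (IH4 Ht Hy H); rewrite Hz.
- by move: (IH4 Ht Hz H); rewrite Hy.
Qed.

Lemma L_two x y : 1 <= u -> pos u x <> None -> pos u.-1 x = None ->
  pos u.-1 y = Some s -> pos u y <> Some s -> False.
Proof.
move=> H1 Hx Hx' Hy Hy'.
have Hu1 : u.-1.+1 = u by lia.
have := appear Hx'; rewrite Hu1 => /(_ Hx) [_ [Hpos [r'' [Hr1 Hr2]]] Hxm _].
have Hyx : y < x by apply: (prefix_lt (IH1 (leq_pred u))) => //; rewrite Hy.
have Hyx1 : y = x.-1.
  case: (ltnP y x.-1) => H; last by lia.
  by case: Hxm; apply: (IH4 (leq_pred u) Hy H).
have [H2 Hxm2] : 2 <= u /\ pos u.-2 y <> None.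
  by apply: (IH2 (leqnn u)); have -> : y.+1 = x by lia.
have Hys : pos u.-2 y = Some s.
  by apply: (IH5 (leq_pred u) Hy) => //; lia.
have Hr : r'' = y by apply: (@s_uniq u.-2) => //; lia.
by subst r''; apply: Hr2.
Qed.

Lemma stepG1 : G1 u.+1.
Proof.
move=> r Hr1.
case: (classic (pos u r.+1 = None)) => Hn.
  case: (appear Hn Hr1) => _ _ Hp _.
  by apply: (IHP (leqnn u)).
by apply: (IHP (leqnn u)); apply: (IH1 (leqnn u)).
Qed.

Lemma stepG2 : G2 u.+1.
Proof.
move=> r Hr1 /=.
case: (classic (pos u r.+1 = None)) => Hn.
  case: (appear Hn Hr1) => _ [Hu0 [y [Hy1 Hy2]]] Hp _.
  split; first by lia.
  case: (classic (pos u.-1 r = None)) => // Hr'.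
  have Hyr : y < r by apply: (prefix_lt (IH1 (leq_pred u))) => //; rewrite Hy1.
  by case: (L_two Hu0 Hp Hr' Hy1 Hy2).
case: (IH2 (leqnn u) Hn) => H2 Hp.
split; first by lia.
have -> : u.-1 = u.-2.+1 by lia.
by apply: (IHP (leq_trans (leq_pred _) (leq_pred _))).
Qed.

Lemma stay_s j : pos u.+1 j = Some s -> pos u j <> None -> pos u j = Some s.
Proof.
move=> Hj Hp.
have Hh := HnoH Hu.
case: (ltngtP j (lead u)) => Hjl.
- by rewrite -stopped_stay.
- move: Hj; rewrite follower_step // => Hj.
  case: (IH6 (leqnn u) Hjl Hp) => H2 ->.
  apply: (IH5 (leq_pred u) Hj); first by lia.
  by case: (IH6 (leqnn u) Hjl Hp) => _ <-.
- subst j; case: (leader_step Hh) => [[q [Hq [Hq1 _]]]|[H _]].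
    by rewrite Hq1 in Hj; case: Hj => Hq2; subst q; case: (not_frontier_s Hq).
  by rewrite -H.
Qed.

Lemma stepG5 : G5 u.+1.
Proof.
move=> j t' Hj Ht' Hp.
move: Ht'; rewrite leq_eqVlt => /orP [/eqP ->//|]; rewrite ltnS => Ht'.
have Hpu : pos u j <> None by apply: (persU (t1 := t')) => //; lia.
by apply: (IH5 (leqnn u) (stay_s Hj Hpu)).
Qed.

Lemma stepG4 : G4 u.+1.
Proof.
move=> j i Hj Hji.
case: (classic (pos u.+1 i = None)) => // Hi; exfalso.
have Hj1 : pos u.+1 j.+1 <> None by apply: (prefix stepG1 Hji Hi).
case: (classic (pos u j = None)) => Hju.
  case: (classic (pos u j.+1 = None)) => Hj1u.
    by case: (appear Hj1u Hj1) => _ _ H _.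
  by case: Hju; apply: (IH1 (leqnn u)).
have Hjs := stay_s Hj Hju.
case: (classic (pos u j.+1 = None)) => Hj1u; last first.
  by case: Hj1u; apply: (IH4 (leqnn u) Hjs).
case: (appear Hj1u Hj1) => _ [Hu0 [y [Hy1 Hy2]]] _ _.
case: (classic (pos u.-1 j = None)) => Hjm.
  have Hyj : y < j by apply: (prefix_lt (IH1 (leq_pred u))) => //; rewrite Hy1.
  by apply: (L_two Hu0 Hju Hjm Hy1 Hy2).
have Hjs' : pos u.-1 j = Some s by apply: (IH5 (leqnn u) Hjs) => //; apply: leq_pred.
have Hyj := s_uniq (leq_pred u) Hy1 Hjs'.
by subst y; apply: Hy2.
Qed.

Lemma stepG6 : G6 u.+1.
Proof.
move=> r Hr Hp.
have Hl : lead u < r by apply: (leq_ltn_trans (lead_mono (leqnSn u))).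
have Hh := HnoH Hu.
case: (classic (pos u r = None)) => Hn; last first.
  case: (IH6 (leqnn u) Hl Hn) => H2 _.
  by split; [lia | rewrite follower_step].
case: (appear Hn Hp) => _ [Hu0 [y [Hy1 Hy2]]] Hpm ->.
split; first by lia.
have Hyr : y < r.
  apply: (prefix_lt (IH1 (leqnn u))) => //.
  have -> : u = u.-1.+1 by lia.
  by apply: (IHP (leq_pred u)); rewrite Hy1.
case: (classic (pos u.-1 r.-1 = None)) => Hrm.
  by case: (L_two Hu0 Hpm Hrm Hy1 Hy2).
case: (ltnP y r.-1) => H.
  by case: Hrm; apply: (IH4 (leq_pred u) Hy1 H).
by have -> : r.-1 = y by lia.
Qed.

Lemma stepP : Pe u.+1.
Proof. by apply: Pe_of; [apply: stepG6 | move=> _; apply: IHP; lia]. Qed.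

End Step.

Lemma inv_all : forall n, n <= T -> forall m, m <= n -> Inv m.
Proof.
elim=> [|n IHn] Hn m Hm.
  by move: Hm; rewrite leqn0 => /eqP ->; exact: inv0.
move: Hm; rewrite leq_eqVlt => /orP [/eqP ->|]; last first.
  by rewrite ltnS => Hm; apply: IHn => //; lia.
have Hu : n < T by lia.
have IH := IHn (ltnW Hn).
split; first by apply: stepG1.
split; first by apply: stepG2.
split; first by apply: stepG4.
split; first by apply: stepG5.
split; first by apply: stepG6.
by apply: stepP.
Qed.

Lemma invG6 t : t <= T -> G6 t. Proof. by move=> H; case: (inv_all H (leqnn t)) => [_ [_ [_ [_ [? _]]]]]. Qed.
Lemma invG2 t : t <= T -> G2 t. Proof. by move=> H; case: (inv_all H (leqnn t)) => [_ [? _]]. Qed.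
Lemma invP t : t <= T -> Pe t. Proof. by move=> H; case: (inv_all H (leqnn t)) => [_ [_ [_ [_ [_ ?]]]]]. Qed.

Lemma persT t1 t2 r : t1 <= t2 <= T -> pos t1 r <> None -> pos t2 r <> None.
Proof. by apply: pers_range => m Hm; apply: invP; lia. Qed.

Lemma K1 : forall t r p, t < T -> pos t r = Some p -> pos t.+1 r <> Some p ->
  exists q, [/\ pos t.+1 r = Some q, q \in R & forall t', t' <= t -> pos t' r <> Some q].
Proof.
elim/ltn_ind=> t IHt r p Ht Hp Hm.
have Hh := HnoH Ht.
case: (ltngtP r (lead t)) => Hrl.
- by case: Hm; rewrite stopped_stay.
- have Hpn : pos t r <> None by rewrite Hp.
  move: Hm; rewrite follower_step // => Hm.
  case: (invG6 (ltnW Ht) Hrl Hpn) => H2 Heq.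
  have Ht2 : t.-1 = t.-2.+1 by lia.
  rewrite Heq in Hp; rewrite Ht2 in Hm.
  case: (IHt t.-2 _ r.-1 p _ Hp Hm) => [||q [Hq1 Hq2 Hq3]]; try lia.
  exists q; split => //; first by rewrite Ht2.
  move=> t' Ht' Hq.
  have Hl : lead t' < r by apply: (leq_ltn_trans (lead_mono Ht')).
  have Hqn : pos t' r <> None by rewrite Hq.
  case: (invG6 (leq_trans Ht' (ltnW Ht)) Hl Hqn) => H2' Heq'.
  by apply: (Hq3 t'.-2); [lia | rewrite -Heq'].
- subst r; case: (leader_step Hh) => [[q [[Hq1 Hq2] [Hq3 _]]]|[H _]]; last first.
    by case: Hm; rewrite H.
  exists q; split => // t' Ht' Hq.
  by apply: (Hq2 t' Ht'); exists (lead t).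
Qed.

Lemma moves_bound r : moves pos r T <= #|` R|.
Proof.
rewrite /moves (sum_count_iota (fun t => (pos t r != None) && (pos t.+1 r != pos t r))) -size_filter.
set S := filter _ _.
have HS t : t \in S -> exists q, [/\ t < T, pos t.+1 r = Some q, q \in R
   & forall t', t' <= t -> pos t' r <> Some q].
  rewrite mem_filter mem_iota add0n => /andP [/andP [H1 H2] /andP [_ H3]].
  case E : (pos t r) H1 H2 => [p|//] _ H2.
  case: (K1 H3 E) => [|q [Hq1 Hq2 Hq3]]; first by apply/eqP.
  by exists q.
pose f t := odflt s (pos t.+1 r).
rewrite -(size_map f).
apply: uniq_leq_size.
  rewrite map_inj_in_uniq; first by apply: filter_uniq; apply: iota_uniq.
  move=> t1 t2 H1 H2; rewrite /f.
  case: (HS _ H1) => q1 [_ E1 _ F1]; case: (HS _ H2) => q2 [_ E2 _ F2].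
  rewrite E1 E2 /= => Hq; subst q2.
  case: (ltngtP t1 t2) => // H.
  - by case: (F2 t1.+1 H).
  - by case: (F1 t2.+1 H).
move=> q /mapP [t Ht ->]; rewrite /f.
by case: (HS _ Ht) => q1 [_ -> Hq _].
Qed.


Lemma spacing j : forall t, t <= T -> pos t j <> None -> 2 * j <= t.
Proof.
elim: j => [|j IH] t Ht Hp; first by rewrite muln0.
case: (invG2 Ht Hp) => H2 Hp2.
have := IH t.-2 (leq_trans (leq_trans (leq_pred _) (leq_pred _)) Ht) Hp2.
lia.
Qed.

Lemma lead_count n : count (fun t => lead t.+1 == lead t) (iota 0 n) + lead n = n.
Proof.
elim: n => [|n IH]; first by rewrite /= lead0.
have -> : iota 0 n.+1 = iota 0 (n + 1) by rewrite addn1.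
rewrite iotaD count_cat /= add0n addn0.
case: (lead_next n) => ->; last by rewrite eqn_leq ltnn /=; lia.
by rewrite eqxx /=; lia.
Qed.

Lemma eq_count_bound : (count (fun t => lead t.+1 == lead t) (iota 0 T)).+1 <= #|` R|.
Proof.
rewrite -size_filter.
set S := filter _ _.
have HS t : t \in S -> exists q, [/\ t < T, frontier R pos t q & pos t.+1 (lead t) = Some q].
  rewrite mem_filter mem_iota add0n => /andP [/eqP H1 /andP [_ H3]].
  case: (leader_step (HnoH H3)) => [[q [Hq [Hq1 _]]]|[_ H]].
    by exists q.
  by move: H1; rewrite H => /eqP; rewrite eqn_leq ltnn.
pose g t := odflt s (pos t.+1 (lead t)).
rewrite -(size_map g) -/(size (s :: _)).
apply: uniq_leq_size; last first.
  move=> q; rewrite inE => /orP [/eqP ->//|/mapP [t Ht ->]]; rewrite /g.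
  by case: (HS _ Ht) => q1 [_ [Hq _] ->].
rewrite cons_uniq; apply/andP; split.
  apply/mapP => [[t Ht]]; rewrite /g.
  case: (HS _ Ht) => q1 [_ Hq ->] /= E; subst q1.
  by case: (not_frontier_s Hq).
rewrite map_inj_in_uniq; first by apply: filter_uniq; apply: iota_uniq.
move=> t1 t2 H1 H2; rewrite /g.
case: (HS _ H1) => q1 [_ F1 E1]; case: (HS _ H2) => q2 [_ F2 E2].
rewrite E1 E2 /= => Hq; subst q2.
case: (ltngtP t1 t2) => // H.
- by case: F2 => _ F2; case: (F2 t1.+1 H); exists (lead t1).
- by case: F1 => _ F1; case: (F1 t2.+1 H); exists (lead t2).
Qed.

Lemma present_bound r : pos T r <> None -> r < #|` R|.
Proof.
move=> Hp.
have H1 := spacing (leqnn T) Hp.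
have H2 := spacing (leqnn T) (lead_present (t := T)).
have H3 := lead_count T.
have H4 := eq_count_bound.
lia.
Qed.

Lemma moves_zero r : pos T r = None -> moves pos r T = 0.
Proof.
move=> Hn; apply: big1 => [[t Ht]] _ /=.
case E : (pos t r) => [p|//] /=.
have H : pos T r <> None by apply: (@persT t T r); [rewrite (ltnW Ht) leqnn | rewrite E].
by rewrite Hn in H.
Qed.

Lemma sum_bound N : \sum_(r < N) moves pos r T <= #|` R| ^ 2.
Proof.
apply: (@leq_trans (\sum_(r < N) (r < #|` R|) * #|` R|)).
  apply: leq_sum => r _.
  case: (classic (pos T r = None)) => Hn; first by rewrite moves_zero.
  by rewrite (present_bound Hn) mul1n moves_bound.
rewrite -big_distrl /= (sum_count_iota (fun r => r < #|` R|)) -size_filter expnS mulnC leq_mul2l.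
apply/orP; right; apply: (@leq_trans (size (iota 0 #|` R|))); last by rewrite size_iota.
apply: uniq_leq_size; first by apply: filter_uniq; apply: iota_uniq.
by move=> x; rewrite mem_filter !mem_iota => /andP [-> _].
Qed.

End DF.

Lemma halted_persist R s pos lead t : dflf_run R s pos lead -> halted R s pos lead t ->
  forall k, halted R s pos lead (t + k) /\ forall r, pos (t + k) r = pos t r.
Proof.
move=> Hrun Ht; elim=> [|k [Hk Hp]]; first by rewrite addn0.
case: (@halted_frozen R s pos lead Hrun _ Hk) => Hf Hl.
rewrite addnS; split; last by move=> r; rewrite Hf.
case: Hk => H1 H2; split; first by rewrite Hl Hf.
move=> [q [Hadj [Hq Hfr]]]; apply: H2; exists q; split => //; split => // t' Ht'.
by apply: Hfr; apply: (leq_trans Ht').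
Qed.

Lemma no_halt R s pos lead T : dflf_run R s pos lead -> makespan R pos T ->
  forall t, t < T -> ~ halted R s pos lead t.
Proof.
move=> Hrun [HT Hmin] t Ht Hh; apply: (Hmin t Ht) => q Hq.
case: (HT q Hq) => r Hr; exists r.
case: (halted_persist Hrun Hh (T - t)) => _ Hp.
by rewrite -Hp subnKC // ltnW.
Qed.

Local Open Scope fset_scope.

Theorem mainTheorem4 (R : {fset pixel}) (s : pixel)
    (pos : nat -> nat -> option pixel) (lead : nat -> nat) (T : nat) :
  connected_env R -> s \in R ->
  dflf_run R s pos lead -> makespan R pos T ->
  (forall r, moves pos r T <= #|` R|) /\
  (forall N, \sum_(r < N) moves pos r T <= #|` R| ^ 2).
Proof.
move=> _ Hs Hrun Hmk.
have HnoH := no_halt Hrun Hmk.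
split.
  by move=> r; apply: (moves_bound Hs Hrun HnoH).
by move=> N; apply: (sum_bound Hs Hrun HnoH).
Qed.
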